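(* Let $G$ be an abelian group of order $9p^{4s}$, where $p\ge 5$ is a prime and $s$ is a positive integer. Then there does not exist a $(9p^{4s},\ r(3p^{2s}+1),\ -3p^{2s}+r^2+3r,\ r^2+r)$-partial difference set in $G$ with $r=(3p^{2s}-5)/2$.
   Context: For a finite abelian group $G$ of order $v$, a subset $D\subseteq G$ of size $k$ is a $(v,k,\lambda,\mu)$-partial difference set (PDS) if the expressions $gh^{-1}$ with $g,h\in D$, $g\ne h$, represent each non-identity element of $D$ exactly $\lambda$ times and each non-identity element of $G\setminus D$ exactly $\mu$ times. *)

(* Defs.v *)
From mathcomp Require Import all_boot all_order all_algebra all_fingroup.
From mathcomp Require Import ssrint.
Set Implicit Arguments. Unset Strict Implicit. Unset Printing Implicit Defensive.
Import GRing.Theory Num.Theory.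
Local Open Scope ring_scope.

Definition pds_count (gT : finGroupType) (D : {set gT}) (x : gT) : nat :=
  #|[set gh : gT * gT | [&& gh.1 \in D, gh.2 \in D, gh.1 != gh.2
                           & (gh.1 * gh.2^-1)%g == x]]|.

Definition is_pds (gT : finGroupType) (G D : {set gT}) (v k : nat)
    (lam mu : int) : Prop :=
  [/\ D \subset G, #|G| = v, #|D| = k,
      (forall x, x \in D -> x != 1%g -> (pds_count D x)%:Z = lam) &
      (forall x, x \in G :\: D -> x != 1%g -> (pds_count D x)%:Z = mu)].

(* Main.v *)
Require Import Defs.
From mathcomp Require Import all_boot all_order all_algebra all_fingroup all_solvable all_field all_character.
From mathcomp Require Import zify ring lra.
Set Implicit Arguments. Unset Strict Implicit. Unset Printing Implicit Defensive.
Import GRing.Theory Num.Theory.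
Local Open Scope ring_scope.
Lemma pds_sum (gT : finGroupType) (G : {group gT}) (D : {set gT}) (F : gT -> algC) :
  D \subset G ->
  \sum_(g in D) \sum_(h in D) F (g * h^-1)%g =
  #|D|%:R * F 1%g + \sum_(x in G) (pds_count D x)%:R * F x.
Proof.
move=> sDG.
rewrite (eq_bigr (fun g => F 1%g +
          \sum_(h in D | h != g) F (g * h^-1)%g)); last first.
  by move=> g Dg; rewrite (bigD1 g) //= mulgV.
rewrite big_split /= sumr_const mulr_natl; congr (_ + _).
rewrite pair_big_dep /=.
rewrite (partition_big (fun u => (u.1 * u.2^-1)%g) (mem G)) /=; last first.
  by move=> [g h] /= /andP[Dg /andP[Dh _]]; rewrite groupM ?groupV ?(subsetP sDG).
apply: eq_bigr => x Gx.
rewrite (eq_bigr (fun _ => F x)); last by move=> u /andP[_ /eqP->].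
rewrite sumr_const mulr_natl /pds_count; congr (_ *+ _).
apply: eq_card => [[g h]]; rewrite !inE /=.
by rewrite unfold_in /= -!andbA eq_sym.
Qed.

Lemma pds_count1 (gT : finGroupType) (D : {set gT}) : pds_count D 1%g = 0%N.
Proof.
apply/eqP; rewrite cards_eq0; apply/eqP/setP => [[g h]]; rewrite !inE /=.
by rewrite -eq_mulgV1; case: eqP => [->|_]; rewrite ?eqxx ?andbF.
Qed.

Lemma pds_char (gT : finGroupType) (G : {group gT}) (D : {set gT})
    (lam mu : int) (f : gT -> algC) :
  D \subset G ->
  (forall x, x \in D -> x != 1%g -> (pds_count D x)%:Z = lam) ->
  (forall x, x \in G :\: D -> x != 1%g -> (pds_count D x)%:Z = mu) ->
  f 1%g = 1 ->
  {in G &, forall x y, f (x * y)%g = f x * f y} ->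
  {in G, forall x, f x^-1%g = (f x)^*} ->
  (\sum_(g in D) f g) * (\sum_(g in D) f g)^* =
  #|D|%:R + lam%:~R * ((\sum_(g in D) f g) - (1%g \in D)%:R)
     + mu%:~R * (\sum_(x in G) f x - (\sum_(g in D) f g) - (1%g \notin D)%:R).
Proof.
move=> sDG hl hm f1 fM fV.
have sD x : x \in D -> x \in G by move/(subsetP sDG).
set s := \sum_(g in D) f g.
have -> : s * s^* = \sum_(g in D) \sum_(h in D) f (g * h^-1)%g.
  rewrite rmorph_sum mulr_suml; apply: eq_bigr => g Dg.
  rewrite mulr_sumr; apply: eq_bigr => h Dh.
  by rewrite fM ?groupV ?sD // fV ?sD.
rewrite (@pds_sum _ G) // f1 mulr1 -addrA; congr (_ + _).
pose c x : algC := if x \in D then lam%:~R else mu%:~R.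
have e1 : \sum_(x in G) (pds_count D x)%:R * f x =
     \sum_(x in G) c x * f x - c 1%g.
  rewrite [in RHS](bigD1 1%g) //= f1 mulr1 addrAC subrr add0r.
  rewrite (bigD1 1%g) //= pds_count1 mul0r add0r.
  apply: eq_bigr => x /andP[Gx nx1]; congr (_ * _).
  rewrite /c; case: ifP => Dx.
    by rewrite -(hl x Dx nx1) pmulrn.
  by rewrite -(hm x _ nx1) ?pmulrn // inE Dx.
rewrite e1 (bigID (mem D)) /=.
have -> : \sum_(x in G | x \in D) c x * f x = lam%:~R * s.
  rewrite mulr_sumr /s; apply: eq_big => [x|x /andP[_ Dx]]; last by rewrite /c Dx.
  by rewrite andb_idl // => /sD.
have -> : \sum_(x in G | x \notin D) c x * f x = mu%:~R * (\sum_(x in G) f x - s).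
  rewrite (bigID (mem D) (mem G)) /= addrAC.
  have -> : \sum_(x in G | x \in D) f x = s.
    by apply: eq_bigl => x; rewrite andb_idl // => /sD.
  rewrite subrr add0r mulr_sumr; apply: eq_bigr => x /andP[_ nDx].
  by rewrite /c (negbTE nDx).
rewrite /c; case: ifP => D1 /=; rewrite ?subr0; ring.
Qed.
Lemma root_lemma (s N R : algC) :
  R *+ 2 + 5%:R = N *+ 3 ->
  s * s^* = R * (N *+ 3 + 1) + (- (N *+ 3) + R ^+ 2 + R *+ 3) * s
            + (R ^+ 2 + R) * (- s - 1) ->
  N^* = N -> R^* = R ->
  s = R \/ s = R - N *+ 3.
Proof.
move=> hNR H cN cR.
have hs : s^* = s.
  have H' := congr1 (@Num.conj_op _) H.
  rewrite rmorphM /= conjCK mulrC in H'.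
  rewrite H in H'.
  rewrite !(rmorphD, rmorphM, rmorphN, rmorphMn, rmorphXn, rmorph1) /= cN cR in H'.
  have : (s - s^*) * (R *+ 2 - N *+ 3) = 0.
    move/eqP: H'; rewrite -subr_eq0 => /eqP <-; ring.
  move/eqP; rewrite mulf_eq0 => /orP[]; first by rewrite subr_eq0 => /eqP.
  have -> : R *+ 2 - N *+ 3 = - 5%:R by rewrite -hNR; ring.
  by rewrite oppr_eq0 pnatr_eq0.
rewrite hs in H.
have : (s - R) * (s - (R - N *+ 3)) = 0.
  move/eqP: H; rewrite -subr_eq0 => /eqP <-; rewrite -hNR; ring.
move/eqP; rewrite mulf_eq0 !subr_eq0 => /orP[/eqP|/eqP]; by [left|right].
Qed.
Lemma arithZ (V E1 Ep S1 S2 D : int) :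
  let N := 2 * V + 3 in let R := 3 * V + 2 in let M := N ^+ 2 in let C := M - 1 in
  R * (3 * N + 1) + C * R = M * E1 + 3 * N * Ep ->
  D + C * R = N * S1 ->
  D ^+ 2 + C * R ^+ 2 + N ^+ 2 * S2 = M * D + 2 * R * N * S1 ->
  2 * S1 <= Ep + S2 -> 0 <= V -> 0 <= E1 -> False.
Proof.
move=> N R M C hA hB hC hD hV hE.
have eA : 3 * N * Ep = R * (3 * N + 1) + C * R - M * E1 by rewrite hA; ring.
have eC : N ^+ 2 * S2 = M * D + 2 * R * (N * S1) - D ^+ 2 - C * R ^+ 2.
  by rewrite mulrA -hC; ring.
have key : 12 * N ^+ 2 * (Ep + S2 - 2 * S1) =
    4 * N * (3 * N * Ep) + 12 * (N ^+ 2 * S2) - 24 * N * (N * S1) by ring.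
rewrite eC eA -hB in key.
pose q := N ^+ 2 + N - 5.
have key2 : 12 * N ^+ 2 * (Ep + S2 - 2 * S1) =
   - 3 * (2 * D - q) ^+ 2 - (128 * V ^+ 3 + 468 * V ^+ 2 + 540 * V + 189)
   - 4 * N ^+ 3 * E1.
  by rewrite key /q /C /M /R /N; ring.
have h1 : 0 <= (2 * D - q) ^+ 2 by apply: sqr_ge0.
have hN : 0 <= N by rewrite /N; lia.
have h2 : 0 <= N ^+ 3 * E1 by apply: mulr_ge0 => //; apply: exprn_ge0.
have h3 : 0 <= 12 * N ^+ 2 * (Ep + S2 - 2 * S1).
  apply: mulr_ge0; first by apply: mulr_ge0 => //; apply: exprn_ge0.
  by rewrite subr_ge0.
have h4 : 0 <= V ^+ 3 by apply: exprn_ge0.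
have h5 : 0 <= V ^+ 2 by apply: exprn_ge0.
move: key2 h1 h2 h3 h4 h5.
set X1 := (2 * D - q) ^+ 2; set X2 := N ^+ 3 * E1; set X3 := 12 * N ^+ 2 * _.
set X4 := V ^+ 3; set X5 := V ^+ 2.
clear; lia.
Qed.

Section AbChar.
Variables (gT : finGroupType) (H : {group gT}).
Hypothesis cH : abelian H.

Lemma lin (i : Iirr H) : 'chi[H]_i \is a linear_char.
Proof. exact: (char_abelianP H cH). Qed.

Lemma chi1 (i : Iirr H) : 'chi[H]_i 1%g = 1.
Proof. exact: lin_char1 (lin i). Qed.

Lemma chi0E x : x \in H -> 'chi[H]_0 x = 1.
Proof. by move=> Hx; rewrite irr0 cfun1E Hx. Qed.

Lemma chiM (i : Iirr H) x y : x \in H -> y \in H ->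
  'chi_i (x * y)%g = 'chi_i x * 'chi_i y.
Proof. by move=> Hx Hy; rewrite (lin_charM (lin i)). Qed.

Lemma chiV (i : Iirr H) x : x \in H -> 'chi_i x^-1%g = ('chi_i x)^*.
Proof. by move=> Hx; rewrite (lin_charV_conj (lin i)). Qed.

Lemma chiX (i : Iirr H) x q : x \in H -> (x ^+ q)%g = 1%g -> ('chi_i x) ^+ q = 1.
Proof. by move=> Hx xq; rewrite -(lin_charX (lin i)) // xq chi1. Qed.

Lemma sum_chi x : x \in H -> \sum_i 'chi[H]_i x = #|H|%:R * (x == 1%g)%:R.
Proof.
move=> Hx; have := second_orthogonality_relation x (group1 H).
rewrite class1G (eq_bigr (fun i => 'chi[H]_i x)); last first.
  by move=> i _; rewrite chi1 rmorph1 mulr1.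
move=> ->; case: (x =P 1%g) => [->|nx1].
  by rewrite set11 cent11T setIT mulr1.
by rewrite (introF set1gP nx1) mulr0.
Qed.

Lemma sum_chi_conj x y : x \in H -> y \in H ->
  \sum_i 'chi[H]_i x * ('chi_i y)^* = #|H|%:R * (x == y)%:R.
Proof.
move=> Hx Hy; rewrite eq_mulgV1 -sum_chi ?groupM ?groupV //.
by apply: eq_bigr => i _; rewrite chiM ?groupV // chiV.
Qed.

Lemma chi_nontriv (i : Iirr H) : i != 0 -> exists2 x, x \in H & 'chi_i x != 1.
Proof.
move=> ni0; apply/exists_inP; apply: contraR ni0 => /exists_inPn h.
apply/eqP/irr_inj/cfun_inP => x Hx.
by rewrite chi0E //; apply/eqP/negPn/h.
Qed.

End AbChar.
Lemma parity_inv (I : finType) (c : I -> I) (P : pred I) (i0 : I) :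
  involutive c -> c i0 = i0 -> (forall i, c i = i -> i = i0) ->
  (forall i, P (c i) = P i) ->
  ~~ odd #|[set i | P i && (i != i0)]|.
Proof.
move=> cK c0 cfix Pc.
set S := [set i | _].
set Bs := [set i | (enum_rank i < enum_rank (c i))%N].
have e : c @: (S :&: Bs) = S :\: Bs.
  rewrite (can2_imset_pre _ cK cK); apply/setP => x; rewrite !inE /=; rewrite [c (c x)]cK Pc.
  have cx0 : (c x != i0) = (x != i0).
    apply/idP/idP; apply: contra => /eqP h.
      by rewrite h c0.
    by rewrite -(cK x) h c0.
  rewrite cx0; case: (P x); rewrite ?andbF //=; case: (x =P i0) => [_|/eqP nx0]; rewrite ?andbF //=.
  have ncx : c x != x by apply: contra nx0 => /eqP /cfix ->.
  have : enum_rank (c x) != enum_rank x by rewrite (inj_eq enum_rank_inj).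
  by move=> h; rewrite andbT -leqNgt ltn_neqAle h.
rewrite -(cardsID Bs S) -e card_imset; last exact: inv_inj.
by rewrite addnn odd_double.
Qed.

Lemma expg_modq (gT : finGroupType) (x : gT) q a b :
  (x ^+ q)%g = 1%g -> a = b %[mod q] -> (x ^+ a)%g = (x ^+ b)%g.
Proof. by move=> hq hab; rewrite -(expg_mod a hq) -(expg_mod b hq) hab. Qed.

Section Decomp.
Variables (gT : finGroupType) (G : {group gT}) (m : nat).
Hypotheses (cG : abelian G) (oG : #|G| = (9 * m)%N) (cop : coprime 9 m).

Lemma group_set_pow q : group_set [set x in G | (x ^+ q)%g == 1%g].
Proof.
apply/group_setP; split; first by rewrite inE group1 expg1n eqxx.
move=> x y; rewrite !inE => /andP[Gx /eqP xq] /andP[Gy /eqP yq].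
rewrite groupM //= expgMn ?xq ?yq ?mulg1 //.
exact: (centsP cG).
Qed.

Definition Ag := Group (group_set_pow 9).
Definition Bg := Group (group_set_pow m).

Definition e3 := chinese 9 m 1 0.
Definition ep := chinese 9 m 0 1.

Lemma e3_9 : e3 = 1 %[mod 9]. Proof. exact: chinese_modl. Qed.
Lemma e3_m : e3 = 0 %[mod m]. Proof. exact: chinese_modr. Qed.
Lemma ep_9 : ep = 0 %[mod 9]. Proof. exact: chinese_modl. Qed.
Lemma ep_m : ep = 1 %[mod m]. Proof. exact: chinese_modr. Qed.

Lemma expG x : x \in G -> (x ^+ (9 * m))%g = 1%g.
Proof. by move=> Gx; rewrite -oG expg_cardG. Qed.

Lemma mem_Ag x : (x \in Ag) = (x \in G) && ((x ^+ 9)%g == 1%g).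
Proof. by rewrite inE. Qed.
Lemma mem_Bg x : (x \in Bg) = (x \in G) && ((x ^+ m)%g == 1%g).
Proof. by rewrite inE. Qed.

Lemma sub_AG : Ag \subset G.
Proof. by apply/subsetP => x; rewrite mem_Ag => /andP[]. Qed.
Lemma sub_BG : Bg \subset G.
Proof. by apply/subsetP => x; rewrite mem_Bg => /andP[]. Qed.

Lemma e3_in_A x : x \in G -> (x ^+ e3)%g \in Ag.
Proof.
move=> Gx; rewrite mem_Ag groupX //= -expgM.
rewrite (expg_modq (b := 0) (expG Gx)) ?expg0 //.
have hd : (9 * m %| e3 * 9)%N.
  have /dvdnP[c ->] : (m %| e3)%N by rewrite /dvdn e3_m mod0n.
  by apply/dvdnP; exists c; lia.
by rewrite /dvdn in hd; rewrite (eqP hd) mod0n.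
Qed.

Lemma ep_in_B x : x \in G -> (x ^+ ep)%g \in Bg.
Proof.
move=> Gx; rewrite mem_Bg groupX //= -expgM.
rewrite (expg_modq (b := 0) (expG Gx)) ?expg0 //.
have hd : (9 * m %| ep * m)%N.
  have /dvdnP[c ->] : (9 %| ep)%N by rewrite /dvdn ep_9 mod0n.
  by apply/dvdnP; exists c; lia.
by rewrite /dvdn in hd; rewrite (eqP hd) mod0n.
Qed.

Lemma e3ep x : x \in G -> x = (x ^+ e3 * x ^+ ep)%g.
Proof.
move=> Gx; rewrite -expgD (expg_modq (b := 1) (expG Gx)) ?expg1 //.
apply/eqP; rewrite chinese_remainder //; apply/andP; split.
  by rewrite -modnDm e3_9 ep_9.
by rewrite -modnDm e3_m ep_m mod0n add0n modn_mod.
Qed.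

Lemma A_e3 a : a \in Ag -> (a ^+ e3)%g = a.
Proof.
rewrite mem_Ag => /andP[_ /eqP a9].
by rewrite (expg_modq (b := 1) a9) ?expg1 // e3_9.
Qed.
Lemma A_ep a : a \in Ag -> (a ^+ ep)%g = 1%g.
Proof.
rewrite mem_Ag => /andP[_ /eqP a9].
by rewrite (expg_modq (b := 0) a9) ?expg0 // ep_9.
Qed.
Lemma B_ep b : b \in Bg -> (b ^+ ep)%g = b.
Proof.
rewrite mem_Bg => /andP[_ /eqP bm].
by rewrite (expg_modq (b := 1) bm) ?expg1 // ep_m.
Qed.
Lemma B_e3 b : b \in Bg -> (b ^+ e3)%g = 1%g.
Proof.
rewrite mem_Bg => /andP[_ /eqP bm].
by rewrite (expg_modq (b := 0) bm) ?expg0 // e3_m.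
Qed.

Lemma e3_eq1 x : x \in G -> ((x ^+ e3)%g == 1%g) = (x \in Bg).
Proof.
move=> Gx; apply/eqP/idP => [h|/B_e3 //].
by rewrite (e3ep Gx) h mul1g ep_in_B.
Qed.

Lemma powM e x y : x \in G -> y \in G -> ((x * y) ^+ e)%g = (x ^+ e * y ^+ e)%g.
Proof. by move=> Gx Gy; rewrite expgMn //; apply: (centsP cG). Qed.

Lemma card_AB : (#|Ag| * #|Bg|)%N = #|G|.
Proof.
rewrite -cardsX.
have -> : G = [set u.1 * u.2 | u in setX Ag Bg]%g :> {set gT}.
  apply/setP => x; apply/idP/imsetP => [Gx|[[a b]]].
    by exists (x ^+ e3, x ^+ ep)%g; [rewrite inE /= e3_in_A ?ep_in_B | exact: e3ep].
  rewrite in_setX => /andP[Aa Bb] ->.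
  by apply: groupM; [exact: (subsetP sub_AG) | exact: (subsetP sub_BG)].
rewrite card_in_imset // => [[a b] [a' b']]; rewrite !in_setX /=.
move=> /andP[Aa Bb] /andP[Aa' Bb'] eq.
have Ga := subsetP sub_AG _ Aa; have Gb := subsetP sub_BG _ Bb.
have Ga' := subsetP sub_AG _ Aa'; have Gb' := subsetP sub_BG _ Bb'.
have h1 := congr1 (fun z => z ^+ e3)%g eq.
have h2 := congr1 (fun z => z ^+ ep)%g eq.
rewrite /= !powM // in h1 h2.
rewrite (A_e3 Aa) (A_e3 Aa') (B_e3 Bb) (B_e3 Bb') !mulg1 in h1.
rewrite (A_ep Aa) (A_ep Aa') (B_ep Bb) (B_ep Bb') !mul1g in h2.
by rewrite h1 h2.
Qed.


Local Notation A := Ag.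
Local Notation B := Bg.

Definition phi (i : Iirr A) (j : Iirr B) (g : gT) : algC :=
  'chi[A]_i (g ^+ e3)%g * 'chi[B]_j (g ^+ ep)%g.

Lemma cA : abelian A. Proof. exact: abelianS sub_AG cG. Qed.
Lemma cB : abelian B. Proof. exact: abelianS sub_BG cG. Qed.

Lemma phi1 i j : phi i j 1%g = 1.
Proof. by rewrite /phi !expg1n (chi1 cA) (chi1 cB) mulr1. Qed.

Lemma GA x : x \in A -> x \in G. Proof. exact: (subsetP sub_AG). Qed.
Lemma GB x : x \in B -> x \in G. Proof. exact: (subsetP sub_BG). Qed.

Lemma phiM i j : {in G &, forall x y, phi i j (x * y)%g = phi i j x * phi i j y}.
Proof.
move=> x y Gx Gy; rewrite /phi !powM // (chiM cA) ?e3_in_A // (chiM cB) ?ep_in_B //.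
by rewrite mulrACA.
Qed.

Lemma phiV i j : {in G, forall x, phi i j x^-1%g = (phi i j x)^*}.
Proof.
move=> x Gx; rewrite /phi !expgVn (chiV cA) ?e3_in_A // (chiV cB) ?ep_in_B //.
by rewrite rmorphM.
Qed.

Lemma phiA i j a : a \in A -> phi i j a = 'chi_i a.
Proof. by move=> Aa; rewrite /phi A_e3 // A_ep // (chi1 cB) mulr1. Qed.
Lemma phiB i j b : b \in B -> phi i j b = 'chi_j b.
Proof. by move=> Bb; rewrite /phi B_e3 // B_ep // (chi1 cA) mul1r. Qed.

Lemma phi_sum0 i j : (i != 0) || (j != 0) -> \sum_(x in G) phi i j x = 0.
Proof.
move=> nz.
have [a Ga na1] : exists2 a, a \in G & phi i j a != 1.
  case/orP: nz => [/chi_nontriv[a Aa na]|/chi_nontriv[b Bb nb]].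
    by exists a; rewrite ?GA // phiA.
  by exists b; rewrite ?GB // phiB.
have e : \sum_(x in G) phi i j x = phi i j a * \sum_(x in G) phi i j x.
  rewrite mulr_sumr (reindex_inj (mulgI a)) /=.
  apply: eq_big => [x|x Gx]; first by rewrite groupMl.
  by rewrite phiM //; rewrite groupMl in Gx.
have : (1 - phi i j a) * \sum_(x in G) phi i j x = 0 by rewrite mulrBl mul1r -e subrr.
move/eqP; rewrite mulf_eq0 subr_eq0 eq_sym (negbTE na1) /=.
by move/eqP.
Qed.

Variables (D : {set gT}) (n r : nat).
Hypotheses (sDG : D \subset G) (D1 : 1%g \notin D)
  (hk : #|D| = (r * (3 * n + 1))%N)
  (hl : forall x, x \in D -> x != 1%g ->
          (pds_count D x)%:Z = - (3 * n)%:Z + (r ^ 2)%:Z + (3 * r)%:Z)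
  (hm : forall x, x \in G :\: D -> x != 1%g ->
          (pds_count D x)%:Z = ((r ^ 2 + r)%N)%:Z)
  (hnr : (2 * r + 5 = 3 * n)%N).

Definition sv i j := \sum_(g in D) phi i j g.

Lemma s_vals i j : (i != 0) || (j != 0) ->
  sv i j = r%:R \/ sv i j = r%:R - (3 * n)%:R.
Proof.
move=> nz.
have := pds_char sDG hl hm (phi1 i j) (phiM i j) (phiV i j).
rewrite phi_sum0 // (negbTE D1) hk -/(sv i j) subr0 sub0r /=.
have e1 : ((- (3 * n)%:Z + (r ^ 2)%:Z + (3 * r)%:Z)%:~R : algC) =
   - (n%:R *+ 3) + r%:R ^+ 2 + r%:R *+ 3.
  by rewrite intrD intrD intrN -!pmulrn natrM natrX natrM !mulr_natl.
have e2 : (((r ^ 2 + r)%N)%:Z%:~R : algC) = r%:R ^+ 2 + r%:R.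
  by rewrite -pmulrn natrD natrX.
rewrite e1 e2 => H.
have hNR : (r%:R : algC) *+ 2 + 5%:R = n%:R *+ 3.
  by rewrite -mulrnA -[in RHS]mulrnA -natrD mulnC hnr mulnC.
have H' : sv i j * (sv i j)^* = r%:R * (n%:R *+ 3 + 1) +
   (- (n%:R *+ 3) + r%:R ^+ 2 + r%:R *+ 3) * sv i j +
   (r%:R ^+ 2 + r%:R) * (- sv i j - 1).
  by rewrite H !natrM natrD; ring.
have := root_lemma hNR H' (rmorph_nat _ _) (rmorph_nat _ _).
by rewrite natrM mulr_natl.
Qed.

Hypotheses (oA : #|A| = 9%N) (oB : #|B| = m).

Definition Y (j : Iirr B) := \sum_(g in D | g \in B) 'chi[B]_j g.

Lemma sum_sv j : \sum_i sv i j = 9%:R * Y j.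
Proof.
rewrite /sv exchange_big /= /Y big_mkcondr mulr_sumr /=.
apply: eq_bigr => g Dg; have Gg := subsetP sDG g Dg.
rewrite /phi -mulr_suml (sum_chi cA) ?e3_in_A // oA e3_eq1 //.
by case: ifP => Bg; rewrite ?mulr1 ?mulr0 ?mul0r // B_ep // mulrC.
Qed.

Definition tt := chinese 9 m 8 1.

Lemma cop_tt : coprime tt (9 * m).
Proof.
rewrite coprimeMr; apply/andP; split.
  by rewrite -coprime_modl /tt chinese_modl.
by rewrite -coprime_modl /tt chinese_modr // coprime_modl coprime1n.
Qed.

Lemma sv_conj i j : j != 0 -> sv (conjC_Iirr i) j = sv i j.
Proof.
move=> nj.
have [u hu] := Qn_aut_exists cop_tt.
have fix_s : u (sv i j) = sv i j.
  have nz : (i != 0) || (j != 0) by rewrite nj orbT.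
  by case: (s_vals nz) => ->; rewrite ?rmorphB /= !rmorph_nat.
rewrite -[RHS]fix_s /sv rmorph_sum; apply: eq_bigr => g Dg.
have Gg := subsetP sDG g Dg.
have Aa := e3_in_A Gg; have Bb := ep_in_B Gg.
move: Aa Bb; set a := (g ^+ e3)%g; set b := (g ^+ ep)%g => Aa Bb.
have a9 : (a ^+ 9)%g = 1%g by move: Aa; rewrite mem_Ag => /andP[_ /eqP].
have bm : (b ^+ m)%g = 1%g by move: Bb; rewrite mem_Bg => /andP[_ /eqP].
rewrite /phi rmorphM /= -/a -/b.
have za : ('chi[A]_i a) ^+ 9 = 1 by apply: (chiX cA).
have zb : ('chi[B]_j b) ^+ m = 1 by apply: (chiX cB).
rewrite !hu; last 2 first.
- by rewrite mulnC exprM zb expr1n.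
- by rewrite exprM za expr1n.
congr (_ * _).
  rewrite -(expr_mod _ za) /tt chinese_modl //.
  rewrite (conjC_IirrE i) cfunE (_ : (8 %% 9 = 8)%N) //.
  transitivity ('chi[A]_i (a^-1)%g); first by rewrite (chiV cA).
  rewrite -(lin_charX (lin cA i)) //; congr ('chi_i _).
  by apply/eqP; rewrite eq_invg_mul -expgS a9.
by rewrite -(expr_mod _ zb) /tt chinese_modr // (expr_mod _ zb) expr1.
Qed.

Lemma conj_fix (i : Iirr A) : conjC_Iirr i = i -> i = 0.
Proof.
move=> ci; apply/irr_inj/cfun_inP => a Aa; rewrite (chi0E Aa).
have a9 : (a ^+ 9)%g = 1%g by move: Aa; rewrite mem_Ag => /andP[_ /eqP].
have z9 : ('chi_i a) ^+ 9 = 1 by apply: (chiX cA).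
have zc : ('chi_i a)^* = 'chi_i a.
  by rewrite -[in RHS]ci (conjC_IirrE i) cfunE.
have z2 : ('chi_i a) ^+ 2 = 1.
  rewrite expr2 -{2}zc -normCK (normC_lin_char (lin cA i)) //.
  by rewrite expr1n.
by rewrite -z9 (_ : 9 = 1 + 2 * 4)%N // exprD exprM z2 expr1n mulr1 expr1.
Qed.
Hypotheses (cop3n : coprime 3 n) (m_gt0 : (0 < m)%N).

Lemma Y_int j : j != 0 -> Y j \is a Num.int.
Proof.
move=> nj; apply: Cint_rat_Aint.
  have -> : Y j = (\sum_i sv i j) / 9%:R.
    by rewrite sum_sv mulrAC divff ?mul1r ?pnatr_eq0.
  apply: rpred_div; last exact: rpred_nat.
  apply: rpred_sum => i _.
  have nz : (i != 0) || (j != 0) by rewrite nj orbT.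
  case: (s_vals nz) => ->; first exact: rpred_nat.
  by apply: rpredB; exact: rpred_nat.
apply: rpred_sum => g /andP[_ Bg].
apply: (Aint_unity_root m_gt0); rewrite unity_rootE; apply/eqP.
apply: (chiX cB) => //.
by move: Bg; rewrite mem_Bg => /andP[_ /eqP].
Qed.

Lemma per_j j : j != 0 -> exists (e J : nat),
  [/\ (e <= 1)%N, sv 0 j = r%:R - (3 * n)%:R * e%:R,
      Y j = r%:R - n%:R * J%:R &
      (0 <= e%:Z - 1 + (J%:Z - 1) ^+ 2)%R].
Proof.
move=> nj.
set R3 : algC := r%:R - (3 * n)%:R.
pose E i := (sv i j == R3).
have svE i : sv i j = r%:R - (3 * n)%:R * (E i)%:R.
  have nz : (i != 0) || (j != 0) by rewrite nj orbT.
  rewrite /E; case: (s_vals nz) => ->.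
    case: eqP => [h|_]; last by rewrite mulr0 subr0.
    have n3 : (3 * n)%:R != 0 :> algC.
      by rewrite pnatr_eq0 muln_eq0 /=; apply/eqP => n0; move: cop3n; rewrite n0.
    by move/eqP: h; rewrite /R3 -subr_eq0 opprB addrC subrK (negbTE n3).
  by rewrite eqxx mulr1.
pose M := (\sum_i (E i : nat))%N.
have hsum : \sum_i sv i j = (9 * r)%:R - (3 * n)%:R * M%:R.
  rewrite (eq_bigr _ (fun i _ => svE i)) sumrB sumr_const card_Iirr_abelian ?cA //.
  by rewrite oA -mulr_sumr natr_sum; congr (_ - _); rewrite natrM mulr_natl.
have [y Yy] := intrP (Y_int nj).
have e9 : (9 * y = 9 * r%:Z - 3 * n%:Z * M%:Z)%R.
  apply: (@intr_inj algC); rewrite !rmorphB !rmorphM /= -Yy.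
  rewrite -sum_sv hsum !natrM.
  by rewrite !(intr_nat, pmulrn) -!pmulrn ?intr_nat.
have e3 : ((n * M)%N%:Z = 3 * (r%:Z - y))%R.
  by move: e9; clear; rewrite PoszM; lia.
have h3M : (3 %| M)%N.
  rewrite -(Gauss_dvdr _ cop3n).
  have : (3 %| (n * M)%N%:Z)%Z by apply/dvdzP; exists (r%:Z - y); rewrite e3 mulrC.
  by [].
set J := (M %/ 3)%N.
have MJ : M = (3 * J)%N by rewrite /J mulnC divnK.
have yJ : y = r%:Z - n%:Z * J%:Z by move: e9; rewrite MJ; clear; nia.
have par : ~~ odd #|[set i | E i && (i != 0)]|.
  apply: (parity_inv (c := @conjC_Iirr _ A)).
  - exact: conjC_IirrK.
  - exact: conjC_Iirr0.
  - exact: conj_fix.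
  - by move=> i; rewrite /E sv_conj.
have MK : M = (E 0%R + (#|[set i | E i && (i != 0%R)]|./2).*2)%N.
  rewrite /M (bigD1 0) //=; congr (_ + _)%N.
  have -> : (#|[set i | E i && (i != 0%R)]|./2).*2 = #|[set i | E i && (i != 0%R)]|.
    by have := odd_double_half #|[set i | E i && (i != 0%R)]|; rewrite (negbTE par) add0n.
  rewrite -sum1_card big_mkcond /= [in RHS]big_mkcond /=.
  by apply: eq_bigr => i _; rewrite inE andbC; case: (E i); case: (i != 0).
exists (E 0 : nat), J; split.
- exact: leq_b1.
- by rewrite svE.
- by rewrite Yy yJ rmorphB rmorphM /= -!pmulrn.
- move: MK; rewrite MJ; set K := (_./2)%N; case: (E 0) => /= h.
    by have := sqr_ge0 (J%:Z - 1); clear; lia.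
  have : J != 1%N by apply/eqP => J1; move: h; rewrite J1; lia.
  by clear; case: J => [|[|J]] // _; rewrite expr2; nia.
Qed.

Lemma phi00 g : g \in G -> phi 0 0 g = 1.
Proof. by move=> Gg; rewrite /phi (chi0E (e3_in_A Gg)) (chi0E (ep_in_B Gg)) mulr1. Qed.

Lemma sv00 : sv 0 0 = (r * (3 * n + 1))%:R.
Proof.
rewrite /sv (eq_bigr (fun _ => 1)); last by move=> g Dg; rewrite phi00 // (subsetP sDG).
by rewrite sumr_const hk.
Qed.

Lemma Y0 : Y 0 = #|[set g in D | g \in B]|%:R.
Proof.
rewrite /Y (eq_bigr (fun _ => 1)); last by move=> g /andP[_ Bg]; rewrite chi0E.
by rewrite sumr_const cardsE.
Qed.

Lemma M1 : \sum_j sv 0 j = (m * (\sum_(g in D) ((g ^+ ep)%g == 1%g) : nat))%:R.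
Proof.
rewrite /sv exchange_big /= natrM natr_sum mulr_sumr; apply: eq_bigr => g Dg.
have Gg := subsetP sDG g Dg.
rewrite /phi (chi0E (e3_in_A Gg)) (eq_bigr (fun j => 'chi[B]_j (g ^+ ep)%g)); last first.
  by move=> j _; rewrite mul1r.
by rewrite (sum_chi cB) ?ep_in_B // oB.
Qed.

Lemma M2 : \sum_j Y j = 0.
Proof.
rewrite /Y exchange_big /=; apply: big1 => g /andP[Dg Bg].
rewrite (sum_chi cB) //; case: eqP => [g1|]; last by rewrite mulr0.
by move: Dg D1; rewrite g1 => ->.
Qed.

Lemma M3 : \sum_j Y j * (Y j)^* = (m * #|[set g in D | g \in B]|)%:R.
Proof.
rewrite /Y.
rewrite (eq_bigr (fun j => \sum_(g in D | g \in B) \sum_(h in D | h \in B)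
            'chi[B]_j g * ('chi_j h)^*)); last first.
  move=> j _; rewrite rmorph_sum mulr_suml; apply: eq_bigr => g _.
  by rewrite mulr_sumr.
rewrite exchange_big /=.
rewrite (eq_bigr (fun g => m%:R)); last first.
  move=> g /andP[Dg Bg]; rewrite exchange_big /= (bigD1 g) /=; last by rewrite Dg.
  rewrite (sum_chi_conj cB) // eqxx oB mulr1 big1 ?addr0 // => h /andP[/andP[Dh Bh] nhg].
  by rewrite (sum_chi_conj cB) // eq_sym (negbTE nhg) mulr0.
by rewrite sumr_const natrM mulr_natr cardsE.
Qed.


Definition Pb (j : Iirr B) (eJ : nat * nat) : bool := (j == 0) || [&& (eJ.1 <= 1)%N,
   sv 0 j == r%:R - (3 * n)%:R * eJ.1%:R, Y j == r%:R - n%:R * eJ.2%:R &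
   (0 <= eJ.1%:Z - 1 + (eJ.2%:Z - 1) ^+ 2)%R].

Lemma final_contra : m = (n ^ 2)%N -> False.
Proof.
move=> mn.
have exP j : exists eJ, Pb j eJ.
  case: (eqVneq j 0) => [->|nj]; first by exists (0, 0)%N; rewrite /Pb eqxx.
  have [e [J [h1 h2 h3 h4]]] := per_j nj.
  by exists (e, J); rewrite /Pb (negbTE nj) /= h1 h2 h3 h4 !eqxx.
pose f := fun j => xchoose (exP j).
pose ee := fun j => (f j).1; pose JJ := fun j => (f j).2.
have fP (j : Iirr B) : j != 0 -> [/\ sv 0 j = r%:R - (3 * n)%:R * (ee j)%:R,
     Y j = r%:R - n%:R * (JJ j)%:R & (2 * JJ j <= ee j + JJ j ^ 2)%N].
  move=> nj; rewrite /ee /JJ /f; have := xchooseP (exP j); move: (xchoose (exP j)) => eJ.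
  rewrite /Pb (negbTE nj) /=.
  case/and4P => _ /eqP h2 /eqP h3 h4; split => //.
  move: h4; clear.
  by move=> h; rewrite expr2 in h; nia.
pose Eps := (\sum_(j : Iirr B | j != 0%R) ee j)%N.
pose S1 := (\sum_(j : Iirr B | j != 0%R) JJ j)%N.
pose S2 := (\sum_(j : Iirr B | j != 0%R) JJ j ^ 2)%N.
pose c := #|[pred j : Iirr B | j != 0]|.
pose d1 := #|[set g in D | g \in B]|.
pose e1 := (\sum_(g in D) ((g ^+ ep)%g == 1%g) : nat)%N.
have hc : (c + 1)%N = m.
  rewrite -oB -(card_Iirr_abelian cB) (cardD1 0) addnC; congr (_ + _)%N.
  by apply: eq_card => j; rewrite !inE andbT.
have hA : (r * (3 * n + 1) + c * r = m * e1 + 3 * n * Eps)%N.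
  have := M1; rewrite (bigD1 0) //= sv00.
  rewrite (eq_bigr (fun j => r%:R - (3 * n)%:R * (ee j)%:R)); last first.
    by move=> j nj; case: (fP j nj).
  rewrite sumrB sumr_const -mulr_sumr -natr_sum -/Eps => h.
  set cc := #|_| in h; have ccE : cc = c by apply: eq_card.
  rewrite ccE in h.
  move: h; rewrite -/e1 => h.
  apply/eqP; rewrite -(eqr_nat algC); apply/eqP.
  rewrite natrD [RHS]natrD -h !natrM; ring.
have hB : (d1 + c * r = n * S1)%N.
  have := M2; rewrite (bigD1 0) //= Y0.
  rewrite (eq_bigr (fun j => r%:R - n%:R * (JJ j)%:R)); last first.
    by move=> j nj; case: (fP j nj).
  rewrite sumrB sumr_const -mulr_sumr -natr_sum -/S1 -/d1 => h.
  set cc := #|_| in h; have ccE : cc = c by apply: eq_card.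
  rewrite ccE in h.
  apply/eqP; rewrite -(eqr_nat algC); apply/eqP.
  rewrite natrD natrM; apply/eqP; rewrite -subr_eq0 -[X in _ == X]h; apply/eqP.
  rewrite natrM; ring.
have hC : (d1 ^ 2 + c * r ^ 2 + n ^ 2 * S2 = m * d1 + 2 * r * n * S1)%N.
  have := M3; rewrite (bigD1 0) //= Y0 rmorph_nat.
  rewrite (eq_bigr (fun j => (r ^ 2)%:R + (n ^ 2)%:R * (JJ j ^ 2)%:R
                              - (2 * r * n)%:R * (JJ j)%:R)); last first.
    move=> j nj; case: (fP j nj) => _ -> _.
    rewrite rmorphB rmorphM /= !rmorph_nat !natrX !natrM; ring.
  rewrite sumrB big_split sumr_const /= -!mulr_sumr -!natr_sum -/S1 -/S2 -/d1 => h.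
  set cc := #|_| in h; have ccE : cc = c by apply: eq_card.
  rewrite ccE in h.
  apply/eqP; rewrite -(eqr_nat algC); apply/eqP.
  rewrite !natrD; apply/eqP; rewrite -subr_eq0; apply/eqP.
  rewrite -[X in _ = X](subrr ((m * d1)%:R : algC)) -[X in _ = X - _]h.
  rewrite !natrM; ring.
have hD : (2 * S1 <= Eps + S2)%N.
  rewrite /S1 /Eps /S2 big_distrr /= -big_split /=.
  by apply: leq_sum => j nj; case: (fP j nj).
have [v hv] : exists v, n = (2 * v + 3)%N.
  by exists ((n - 3) %/ 2)%N; move: hnr; clear; lia.
have hr : r = (3 * v + 2)%N by move: hnr; rewrite hv; clear; lia.
have hc' : c = (4 * v * v + 12 * v + 8)%N.
  by move: hc; rewrite mn hv; clear; nia.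
have hm' : m = (4 * v * v + 12 * v + 9)%N by rewrite mn hv; clear; nia.
rewrite hv hr hc' hm' in hA hB hC hD.
apply: (@arithZ v%:Z e1%:Z Eps%:Z S1%:Z S2%:Z d1%:Z).
- by move: hA; clear; lia.
- by move: hB; clear; lia.
- by move: hC; clear; rewrite !expr2; nia.
- by move: hD; clear; lia.
- by [].
- by [].
Qed.

End Decomp.

Lemma one_in_D_contra (gT : finGroupType) (G : {group gT}) (D : {set gT}) (n r : nat) :
  D \subset G -> 1%g \in D -> #|G| = (9 * n ^ 2)%N ->
  #|D| = (r * (3 * n + 1))%N ->
  (forall x, x \in D -> x != 1%g ->
          (pds_count D x)%:Z = - (3 * n)%:Z + (r ^ 2)%:Z + (3 * r)%:Z) ->
  (forall x, x \in G :\: D -> x != 1%g ->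
          (pds_count D x)%:Z = ((r ^ 2 + r)%N)%:Z) ->
  (2 * r + 5 = 3 * n)%N -> False.
Proof.
move=> sDG D1 oG hk hl hm hnr.
have := pds_char (f := fun _ => 1) sDG hl hm erefl
  (fun x y _ _ => esym (mulr1 1)) (fun x _ => esym (rmorph1 _)).
rewrite !sumr_const D1 /= subr0 oG hk rmorph_nat.
set lam := (- _ + _ + _)%R; set mu := Posz _.
set K := (r * (3 * n + 1))%N; set N := (9 * n ^ 2)%N.
move=> h.
have [v hv] : exists v, n = (2 * v + 3)%N.
  by exists ((n - 3) %/ 2)%N; move: hnr; clear; lia.
have hr : r = (3 * v + 2)%N by move: hnr; rewrite hv; clear; lia.
have e1 : (lam%:~R : algC) = - (n%:R *+ 3) + r%:R ^+ 2 + r%:R *+ 3.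
  by rewrite /lam intrD intrD intrN -!pmulrn natrM natrX natrM !mulr_natl.
have e2 : (mu%:~R : algC) = r%:R ^+ 2 + r%:R.
  by rewrite /mu -pmulrn natrD natrX.
have E : K%:R * K%:R - (K%:R + lam%:~R * (K%:R - 1) + mu%:~R * (N%:R - K%:R))
     = - 5%:R :> algC.
  rewrite e1 e2 /K /N hr hv !(natrD, natrM, natrX); ring.
move: E; rewrite h subrr => /eqP; rewrite eq_sym oppr_eq0 pnatr_eq0.
by [].
Qed.

Theorem theorem6 (gT : finGroupType) (G : {group gT}) (p s : nat) :
  abelian G -> prime p -> (5 <= p)%N -> (0 < s)%N ->
  #|G| = (9 * p ^ (4 * s))%N ->
  ~ exists D : {set gT},
      is_pds G D (9 * p ^ (4 * s))
        ((3 * p ^ (2 * s) - 5) %/ 2 * (3 * p ^ (2 * s) + 1))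
        (- (3 * p ^ (2 * s))%:Z + (((3 * p ^ (2 * s) - 5) %/ 2) ^ 2)%:Z
           + (3 * ((3 * p ^ (2 * s) - 5) %/ 2))%:Z)
        ((((3 * p ^ (2 * s) - 5) %/ 2) ^ 2 + (3 * p ^ (2 * s) - 5) %/ 2)%:Z).
Proof.
move=> cG pp p5 s0 oG [D [sDG _ hk hl hm]].
have p0 : (0 < p)%N by apply: prime_gt0.
have mn : (p ^ (4 * s) = (p ^ (2 * s)) ^ 2)%N by rewrite -expnM; congr (p ^ _)%N; lia.
move: oG hk hl hm; rewrite mn.
set n := (p ^ (2 * s))%N; set r := ((3 * n - 5) %/ 2)%N => oG hk hl hm.
set m := (n ^ 2)%N in oG.
have oddp : odd p by case: (even_prime pp) => // p2; move: p5; rewrite p2.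
have oddn : odd n by rewrite /n oddX oddp orbT.
have n5 : (5 <= n)%N.
  apply: (leq_trans p5); rewrite /n -{1}(expn1 p) leq_pexp2l //; lia.
have hnr : (2 * r + 5 = 3 * n)%N.
  have [q hq] : exists q, n = (2 * q + 1)%N.
    by exists n./2; rewrite -{1}(odd_double_half n) oddn addnC -muln2 mulnC.
  by rewrite /r hq in n5 *; clear -n5; lia.
have cop3p : coprime 3 p.
  rewrite coprime_sym prime_coprime //; apply/negP => /dvdn_leq; lia.
have cop3n : coprime 3 n by rewrite /n coprimeXr.
have cop9m : coprime 9 m.
  by rewrite /m /n -expnM coprimeXr // (_ : 9 = 3 ^ 2)%N // coprime_pexpl.
have m_gt0 : (0 < m)%N by rewrite /m expn_gt0 /n expn_gt0 p0.
case: (boolP (1%g \in D)) => D1.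
  by apply: (one_in_D_contra sDG D1 oG hk hl hm hnr).
have hAB := card_AB cG oG cop9m.
have pA : coprime m #|Ag cG|.
  rewrite /m /n -expnM coprimeXl // prime_coprime //; apply/negP.
  move=> /(Cauchy pp) [a Aa oa].
  have : ((a ^+ 9)%g == 1%g) by move: Aa; rewrite mem_Ag => /andP[].
  rewrite -order_dvdn oa (_ : 9 = 3 ^ 2)%N // Euclid_dvdX // andbT.
  by move/dvdn_leq; lia.
have pB : coprime 9 #|Bg m cG|.
  rewrite (_ : 9 = 3 ^ 2)%N // coprime_pexpl // prime_coprime //; apply/negP.
  move=> /(@Cauchy _ 3) [] // b Bb ob.
  have : ((b ^+ m)%g == 1%g) by move: Bb; rewrite mem_Bg => /andP[].
  rewrite -order_dvdn ob /m /n -expnM Euclid_dvdX // dvdn_prime2 //.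
  by case/andP => /eqP p3; move: p5; rewrite -p3.
have dA : (#|Ag cG| %| 9)%N.
  rewrite -(Gauss_dvdl 9 (etrans (coprime_sym _ _) pA)) -oG -hAB; exact: dvdn_mulr.
have dB : (#|Bg m cG| %| m)%N.
  rewrite -(Gauss_dvdr m (etrans (coprime_sym _ _) pB)) -oG -hAB; exact: dvdn_mull.
have lA := dvdn_leq (isT : (0 < 9)%N) dA; have lB := dvdn_leq m_gt0 dB.
have oA : #|Ag cG| = 9%N.
  have h1 : (9 * m <= #|Ag cG| * m)%N by rewrite -oG -hAB leq_mul2l lB orbT.
  by rewrite leq_pmul2r // in h1; apply/eqP; rewrite eqn_leq lA h1.
have oB : #|Bg m cG| = m.
  by move: hAB; rewrite oA oG => /eqP; rewrite eqn_pmul2l // => /eqP.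
exact: (final_contra oG cop9m sDG D1 hk hl hm hnr oA oB cop3n m_gt0 erefl).
Qed.
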